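(* Consider the binary asymmetric channel with a single error and one-time feedback, with $n=n_1+n_2$. Suppose that for each $w\in\{0,1,\ldots,n_1\}$ there is a nonadaptive code of length $n_2$ correcting one asymmetric error with $M_w$ codewords and $F_w$ free points, and assign this code to every input sequence $u\in\{0,1\}^{n_1}$ of Hamming weight $w$ (so that $M(u)=M_w$ and $F(u)=F_w$ depend only on the weight of $u$). If $$(n_1-w)M_{w+1}\le F_w\quad\text{for all } w\in[0,n_1-1],$$ then a single-error-correcting strategy of length $n$ with one-time feedback after the first $n_1$ symbols transmits $$M=\sum_{w=0}^{n_1}\binom{n_1}{w}M_w$$ messages.
   Context: Binary asymmetric channel: alphabet $\{0,1\}$; a transmitted 1 may be received as 0, while a transmitted 0 is always received correctly; ''a single error'' means at most one such error in the whole transmission. A strategy with one-time feedback after $n_1$ symbols for messages $m\in[M]$: the first $n_1$ transmitted symbols depend only on $m$; then the encoder learns the $n_1$ received symbols (error-free, instantaneously), and the remaining $n_2$ symbols depend on $m$ and those received symbols; it transmits $M$ messages if the sets of output sequences reachable from distinct messages with at most one error are pairwise disjoint. A nonadaptive code of length $n_2$ correcting one asymmetric error is a set of codewords in $\{0,1\}^{n_2}$ whose clouds (sets of words obtainable from the codeword by at most one $1\to0$ change) are pairwise disjoint; its free points are the words of $\{0,1\}^{n_2}$ in no cloud. *)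

(* Defs.v *)
From mathcomp Require Import all_boot.
Set Implicit Arguments. Unset Strict Implicit. Unset Printing Implicit Defensive.

Definition word (n : nat) := {ffun 'I_n -> bool}.

Definition flip0 (n : nat) (x : word n) (i : 'I_n) : word n :=
  [ffun j => if j == i then false else x j].

Definition cloud (n : nat) (x : word n) : {set word n} :=
  [set y | (y == x) || [exists i, x i && (y == flip0 x i)]].

Definition asym_code (n : nat) (C : {set word n}) : Prop :=
  forall c c', c \in C -> c' \in C -> c != c' -> [disjoint cloud c & cloud c'].

Definition free_points (n : nat) (C : {set word n}) : {set word n} :=
  [set y | [forall c in C, y \notin cloud c]].

(* Output pairs (received first block, received second block) reachable with at
   most one error in the whole transmission, when the first block sent is x1
   and the second block sent after feedback of the received first block y1 is g y1. *)
Definition outputs (n1 n2 : nat) (x1 : word n1) (g : word n1 -> word n2)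
  : {set (word n1 * word n2)} :=
  [set p | (p.1 \in cloud x1) &&
           (p.2 \in (if p.1 == x1 then cloud (g x1) else [set g p.1]))].

Definition transmits (n1 n2 M : nat) (f1 : 'I_M -> word n1)
  (f2 : 'I_M -> word n1 -> word n2) : Prop :=
  forall m m' : 'I_M, m != m' ->
    [disjoint outputs (f1 m) (f2 m) & outputs (f1 m') (f2 m')].

(* Main.v *)
Require Import Defs.
From mathcomp Require Import all_boot.
Set Implicit Arguments. Unset Strict Implicit. Unset Printing Implicit Defensive.

Definition wt n (u : word n) := #|[set i | u i]|.

Lemma cloud_diff n (u y : word n) : y \in cloud u -> y != u ->
  exists i, [/\ u i, ~~ y i, (forall j, j != i -> y j = u j) & [pick j | u j != y j] = Some i].
Proof.
rewrite inE => /orP[-> //|/existsP[i /andP[ui /eqP ->]]] _.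
exists i; split => //.
- by rewrite /flip0 ffunE eqxx.
- by move=> j /negbTE nji; rewrite /flip0 ffunE nji.
- rewrite /flip0; case: pickP => [j|/(_ i)]; rewrite ffunE.
  + by case: (j =P i) => [-> //|_]; rewrite eqxx.
  + by rewrite eqxx ui.
Qed.

Lemma wt_succ n (u y : word n) i : u i -> ~~ y i -> (forall j, j != i -> y j = u j) ->
  wt u = (wt y).+1.
Proof.
move=> ui yi H; rewrite /wt.
have ->: [set j | u j] = i |: [set j | y j].
  apply/setP => j; rewrite !inE; case: (j =P i) => [->|/eqP/H ->]; by rewrite ?ui.
by rewrite cardsU1 inE (negbTE yi).
Qed.

Lemma wt_le n (u : word n) : wt u <= n.
Proof. by apply: leq_trans (max_card _) _; rewrite card_ord. Qed.

Lemma card_zeros n (y : word n) : #|[set i | ~~ y i]| = n - wt y.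
Proof.
have := cardsC [set j | y j]; rewrite card_ord => E.
have EE: ~: [set j | y j] = [set i | ~~ y i] by apply/setP => j; rewrite !inE.
rewrite EE in E.
by rewrite -[X in _ = X - _]E addKn.
Qed.

Definition emb (T U : finType) (A : {set T}) (B : {set U}) (d : U) (x : T) :=
  nth d (enum B) (index x (enum A)).

Lemma emb_in (T U : finType) (A : {set T}) (B : {set U}) (d : U) (x : T) :
  #|A| <= #|B| -> x \in A -> emb A B d x \in B.
Proof.
move=> le xA; rewrite /emb -mem_enum mem_nth // -cardE.
by apply: leq_trans le; rewrite cardE index_mem mem_enum.
Qed.

Lemma emb_inj (T U : finType) (A : {set T}) (B : {set U}) (d : U) (x y : T) :
  #|A| <= #|B| -> x \in A -> y \in A -> emb A B d x = emb A B d y -> x = y.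
Proof.
move=> le xA yA; rewrite /emb => e.
have ix : index x (enum A) < size (enum B).
  by rewrite -cardE; apply: leq_trans le; rewrite cardE index_mem mem_enum.
have iy : index y (enum A) < size (enum B).
  by rewrite -cardE; apply: leq_trans le; rewrite cardE index_mem mem_enum.
have eq : index x (enum A) = index y (enum A).
  by apply/eqP; rewrite -(nth_uniq d ix iy (enum_uniq (mem B))) e.
have xA' : x \in enum A by rewrite mem_enum.
have yA' : y \in enum A by rewrite mem_enum.
by rewrite -(nth_index x xA') -(nth_index x yA') eq.
Qed.

Lemma card_wt n w : #|[set u : word n | wt u == w]| = 'C(n, w).
Proof.
rewrite -[in RHS](card_ord n) -card_draws.
have inj : injective (fun u : word n => [set i | u i]).
  move=> u v e; apply/ffunP => i; have := congr1 (fun A : {set 'I_n} => i \in A) e; by rewrite /= !inE.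
rewrite -(card_imset _ inj); apply: eq_card => A; rewrite !inE.
apply/imsetP/idP => [[u] | /eqP hA].
  by rewrite inE => /eqP <- ->.
exists [ffun i => i \in A]; last by apply/setP => i; rewrite !inE ffunE.
rewrite inE /wt -hA; apply/eqP; apply: eq_card => i; by rewrite !inE ffunE.
Qed.

Theorem corollary2 (n1 n2 : nat) (C : nat -> {set word n2}) :
  (forall w, w <= n1 -> asym_code (C w)) ->
  (forall w, w < n1 -> (n1 - w) * #|C w.+1| <= #|free_points (C w)|) ->
  exists (f1 : 'I_(\sum_(w < n1.+1) 'C(n1, w) * #|C w|) -> word n1)
         (f2 : 'I_(\sum_(w < n1.+1) 'C(n1, w) * #|C w|) -> word n1 -> word n2),
    transmits f1 f2.
Proof.
move=> Hcode Hcnt.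
set M := \sum_(w < n1.+1) 'C(n1, w) * #|C w|.
pose Msg := [set p : word n1 * word n2 | p.2 \in C (wt p.1)].
have cardMsg : #|Msg| = M.
  rewrite -sum1_card.
  rewrite (eq_bigl (fun p : word n1 * word n2 => xpredT p.1 && (p.2 \in C (wt p.1)))); last first.
    by move=> p; rewrite inE.
  rewrite -(pair_big_dep xpredT (fun u (c : word n2) => c \in C (wt u)) (fun _ _ => 1)) /=.
  under eq_bigr => u _ do rewrite sum1_card.
  rewrite (partition_big (fun u : word n1 => (inord (wt u) : 'I_n1.+1)) xpredT) //=.
  apply: eq_bigr => w _.
  rewrite (eq_bigr (fun _ => #|C w|)); last first.
    by move=> u /eqP E; rewrite -E inordK // ltnS wt_le.
  rewrite big_const iter_addn_0 mulnC -(card_wt n1 w); congr (_ * _); apply: eq_card => u.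
  by rewrite !inE unfold_in /= inordK // ltnS wt_le.
pose d0 : word n1 * word n2 := ([ffun => false], [ffun => false]).
pose msg (m : 'I_M) := nth d0 (enum Msg) m.
have msgIn m : msg m \in Msg by rewrite -mem_enum mem_nth // -cardE cardMsg.
have msgInj : injective msg.
  move=> m m' /eqP; rewrite nth_uniq ?enum_uniq // -?cardE ?cardMsg // => /eqP.
  exact: val_inj.
pose K (y : word n1) := [set p : option 'I_n1 * word n2 |
   (if p.1 is Some i then ~~ y i else false) && (p.2 \in C (wt y).+1)].
pose h (y : word n1) (p : option 'I_n1 * word n2) :=
  emb (K y) (free_points (C (wt y))) [ffun => false] p.
have cardK (y : word n1) (i : 'I_n1) : ~~ y i -> #|K y| <= #|free_points (C (wt y))|.
  move=> yi.
  have ltw : wt y < n1.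
    have := card_zeros y; have : 0 < #|[set i | ~~ y i]|.
      by rewrite card_gt0; apply/set0Pn; exists i; rewrite inE.
    move=> h1 h2; rewrite h2 subn_gt0 in h1; exact: h1.
  apply: leq_trans (Hcnt _ ltw).
  have -> : K y = setX (Some @: [set i | ~~ y i]) (C (wt y).+1).
    apply/setP => -[o c]; rewrite !inE /=; congr (_ && _).
    case: o => [j|]; last by apply/esym/imsetP => -[x _].
    apply/idP/imsetP => [yj|[x]]; first by exists j; rewrite ?inE.
    by rewrite inE => xj [->].
  by rewrite cardsX card_imset ?card_zeros //; move=> a b [].
exists (fun m => (msg m).1).
exists (fun m y => if y == (msg m).1 then (msg m).2
                   else h y ([pick j | (msg m).1 j != y j], (msg m).2)).
move=> m m' neq /=.
have hne : msg m != msg m' by apply: contra neq => /eqP/msgInj ->.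
move: (msgIn m) (msgIn m') hne; case: (msg m) => u c; case: (msg m') => u' c'.
rewrite !inE /= => hc hc' hne.
rewrite disjoint_subset; apply/subsetP => -[y z]; rewrite !inE /= !eqxx.
move=> /andP[yu zu]; apply/negP => /andP[yu' zu'].
have {yu}yu : y \in cloud u by rewrite inE.
have {yu'}yu' : y \in cloud u' by rewrite inE.
have wl w : w <= n1 -> asym_code (C w) := Hcode w.
case: (eqVneq y u) zu => [eyu|nyu] zu; case: (eqVneq y u') zu' => [eyu'|nyu'] zu'.
- subst y u'; have ncc : c != c' by apply: contra hne => /eqP ->.
  have := Hcode _ (wt_le u) _ _ hc hc' ncc.
  by move/disjointFr => /(_ z zu); rewrite zu'.
- subst y; rewrite inE in zu'; move/eqP: zu' => zu'.
  have [i [u'i yi oth pk]] := cloud_diff yu' nyu'.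
  rewrite pk in zu'.
  have inK : (Some i, c') \in K u.
    by rewrite inE /= yi -(wt_succ u'i yi oth).
  have := emb_in [ffun => false] (cardK u i yi) inK.
  rewrite -/(h u (Some i, c')) -zu' inE => /forall_inP /(_ c hc).
  by rewrite zu.
- subst y; rewrite inE in zu; move/eqP: zu => zu.
  have [i [ui yi oth pk]] := cloud_diff yu nyu.
  rewrite pk in zu.
  have inK : (Some i, c) \in K u'.
    by rewrite inE /= yi -(wt_succ ui yi oth).
  have := emb_in [ffun => false] (cardK u' i yi) inK.
  rewrite -/(h u' (Some i, c)) -zu inE => /forall_inP /(_ c' hc').
  by rewrite zu'.
- rewrite inE in zu; move/eqP: zu => zu; rewrite inE in zu'; move/eqP: zu' => zu'.
  have [i [ui yi oth pk]] := cloud_diff yu nyu.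
  have [i' [ui' yi' oth' pk']] := cloud_diff yu' nyu'.
  rewrite pk in zu; rewrite pk' in zu'.
  have inK : (Some i, c) \in K y by rewrite inE /= yi -(wt_succ ui yi oth).
  have inK' : (Some i', c') \in K y by rewrite inE /= yi' -(wt_succ ui' yi' oth').
  have := emb_inj (cardK y i yi) inK inK' (etrans (esym zu) zu').
  case=> ei ec.
  subst i' c'; move/negP: hne; apply; apply/eqP; congr (_, _).
  apply/ffunP => j; case: (eqVneq j i) => [->|nji]; first by rewrite ui ui'.
  by rewrite -oth // -oth'.
Qed.
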